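(* Let $n\geq 0$. There does not exist a set $\Phi$ of modal formulas such that, for every transitive Kripke frame $\mathcal{F}$, every formula of $\Phi$ is valid in $\mathcal{F}$ if and only if $\mathcal{F}$ has circumference at most $n$.
   Context: Modal formulas are built from a denumerable set of propositional variables using $\top,\bot,\neg,\land,\lor,\to$ and unary modalities $\Diamond,\Box$. A (Kripke) frame is $\mathcal{F}=(W,R)$ with $R$ a binary relation on a set $W$; a model on it adds a valuation $V$ assigning subsets of $W$ to variables; truth sets are defined inductively with Boolean connectives interpreted set-theoretically, $\Diamond\varphi$ true at $x$ iff some $R$-successor of $x$ satisfies $\varphi$, and $\Box\varphi$ true at $x$ iff all $R$-successors of $x$ satisfy $\varphi$. A formula is valid in $\mathcal{F}$ if it is true at every point of every model on $\mathcal{F}$. A frame is transitive if $R$ is transitive. A cycle of length $m\geq 1$ is a sequence $x_1,\dots,x_m$ of distinct points with $x_1Rx_2R\cdots Rx_mRx_1$; the circumference of a frame is the supremum of the lengths of its cycles (0 if there are none). *)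

(* Defs.v *)
From Stdlib Require Import Arith.

Inductive form : Type :=
| Var : nat -> form
| Top : form
| Bot : form
| Neg : form -> form
| And : form -> form -> form
| Or : form -> form -> form
| Imp : form -> form -> form
| Dia : form -> form
| Box : form -> form.

Fixpoint sat {W : Type} (R : W -> W -> Prop) (V : nat -> W -> Prop)
  (x : W) (f : form) : Prop :=
  match f with
  | Var p => V p x
  | Top => True
  | Bot => False
  | Neg a => ~ sat R V x a
  | And a b => sat R V x a /\ sat R V x b
  | Or a b => sat R V x a \/ sat R V x b
  | Imp a b => sat R V x a -> sat R V x b
  | Dia a => exists y, R x y /\ sat R V y a
  | Box a => forall y, R x y -> sat R V y a
  end.

Definition valid {W : Type} (R : W -> W -> Prop) (f : form) : Prop :=
  forall (V : nat -> W -> Prop) (x : W), sat R V x f.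

Definition transitive_frame {W : Type} (R : W -> W -> Prop) : Prop :=
  forall x y z, R x y -> R y z -> R x z.

Definition is_cycle {W : Type} (R : W -> W -> Prop) (m : nat) (x : nat -> W) : Prop :=
  1 <= m /\
  (forall i j, i < m -> j < m -> x i = x j -> i = j) /\
  (forall i, i < m -> R (x i) (x ((i + 1) mod m))).

(* circumference (supremum of cycle lengths, 0 if none) is at most n *)
Definition circumference_le {W : Type} (R : W -> W -> Prop) (n : nat) : Prop :=
  forall m x, is_cycle R m x -> m <= n.

(* Main.v *)
Require Import Defs.
From Stdlib Require Import Arith Lia.

Definition RG (a b : nat * nat) : Prop := fst a < fst b.

Lemma transfer (V : nat -> nat -> Prop) (phi : form) : forall w,
  sat RG (fun p w => V p (snd w)) w phi <-> sat (fun _ _ : nat => True) V (snd w) phi.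
Proof.
  induction phi; intros w; simpl; try tauto.
  - rewrite IHphi; tauto.
  - rewrite IHphi1, IHphi2; tauto.
  - rewrite IHphi1, IHphi2; tauto.
  - rewrite IHphi1, IHphi2; tauto.
  - split.
    + intros [y [_ Hy]]. exists (snd y). split; [exact I|]. now apply IHphi.
    + intros [y [_ Hy]]. exists (S (fst w), y). split.
      * unfold RG; simpl; lia.
      * apply IHphi. exact Hy.
  - split.
    + intros H y _. apply (IHphi (S (fst w), y)). apply H. unfold RG; simpl; lia.
    + intros H y _. apply IHphi. apply H. exact I.
Qed.

Lemma G_circ (n : nat) : circumference_le RG n.
Proof.
  intros m x [Hm [_ Hc]]. exfalso.
  assert (Hi : forall i, i < m -> fst (x 0) + i <= fst (x i)).
  { induction i; intros Hi; [lia|].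
    specialize (IHi ltac:(lia)). specialize (Hc i ltac:(lia)).
    rewrite Nat.mod_small in Hc by lia. unfold RG in Hc.
    replace (i+1) with (S i) in Hc by lia. lia. }
  specialize (Hi (m-1) ltac:(lia)). specialize (Hc (m-1) ltac:(lia)).
  replace (m - 1 + 1) with m in Hc by lia. rewrite Nat.mod_same in Hc by lia.
  unfold RG in Hc. lia.
Qed.

Theorem theorem2 (n : nat) :
  ~ exists Phi : form -> Prop,
      forall (W : Type) (R : W -> W -> Prop),
        transitive_frame R ->
        ((forall phi, Phi phi -> valid R phi) <-> circumference_le R n).
Proof.
  intros [Phi H].
  assert (HG : forall phi, Phi phi -> valid RG phi).
  { apply (H _ RG). unfold transitive_frame, RG; intros; lia. apply G_circ. }
  assert (HF : circumference_le (fun _ _ : nat => True) n).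
  { apply (H nat (fun _ _ => True)). unfold transitive_frame; auto.
    intros phi Hp V x. apply (transfer V phi (0, x)). apply HG; exact Hp. }
  specialize (HF (S n) (fun i => i)). assert (S n <= n); [|lia].
  apply HF. split; [lia|]. split; auto.
Qed.
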